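(* Let $A\in\mathbb{R}^{n\times n}$ be symmetric positive semidefinite, let $1\le k\le n$, and let $\mathrm{OPT}=\max_{\|y\|_2=1,\|y\|_0\le k} y^{\intercal}Ay$. For each $i\in[n]$ let $\hat x_i\in\mathbb{R}^n$ be defined by $[\hat x_i]_j=A_{i,j}$ if $|A_{i,j}|$ is one of the $k$ largest (in absolute value) entries of the $i$-th column $A_{\cdot,i}$, and $[\hat x_i]_j=0$ otherwise, and let $x_i=\hat x_i/\|\hat x_i\|_2$. Let $e_i$ denote the $i$-th standard basis vector. Then the best (i.e. maximizing $v^{\intercal}Av$) vector $v$ among all the $x_i$'s and $e_i$'s satisfies $v^{\intercal}Av\ge \mathrm{OPT}/\sqrt{k}$.
   Context: $\|y\|_0$ denotes the number of nonzero entries of $y$. Each $x_i$ and $e_i$ is a unit-norm $k$-sparse vector. *)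

(* Defs.v *)
From mathcomp Require Import all_boot all_order all_algebra.
Set Implicit Arguments. Unset Strict Implicit. Unset Printing Implicit Defensive.
Import Order.TTheory GRing.Theory Num.Theory.
Local Open Scope ring_scope.

Section Defs.
Variables (R : rcfType) (n : nat).

Definition qform (A : 'M[R]_n) (y : 'cV[R]_n) : R := (y^T *m A *m y) 0 0.

Definition norm2 (y : 'cV[R]_n) : R := Num.sqrt (\sum_j (y j 0) ^+ 2).

Definition norm0 (y : 'cV[R]_n) : nat := #|[set j | y j 0 != 0]|.

Definition symmetric_mx (A : 'M[R]_n) : Prop := A^T = A.
Definition psd (A : 'M[R]_n) : Prop := forall y : 'cV[R]_n, 0 <= qform A y.

Definition topk_support (A : 'M[R]_n) (k : nat) (i : 'I_n) (S : {set 'I_n}) : Prop :=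
  #|S| = k /\ forall j l, j \in S -> l \notin S -> `|A l i| <= `|A j i|.

Definition xhat (A : 'M[R]_n) (i : 'I_n) (S : {set 'I_n}) : 'cV[R]_n :=
  \col_j (if j \in S then A j i else 0).

Definition xnorm (A : 'M[R]_n) (i : 'I_n) (S : {set 'I_n}) : 'cV[R]_n :=
  (norm2 (xhat A i S))^-1 *: xhat A i S.

Definition std_basis (i : 'I_n) : 'cV[R]_n := delta_mx i 0.

Definition candidate (A : 'M[R]_n) (S : 'I_n -> {set 'I_n}) (v : 'cV[R]_n) : Prop :=
  exists i, v = xnorm A i (S i) \/ v = std_basis i.

End Defs.

(* Main.v *)
Require Import Defs.
From mathcomp Require Import all_boot all_order all_algebra.
From mathcomp Require Import ring lra zify.
Import Order.TTheory GRing.Theory Num.Theory.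
Local Open Scope ring_scope.
Set Implicit Arguments.
Lemma cs (R : realFieldType) (n : nat) (a b : 'I_n -> R) :
  (\sum_j a j * b j) ^+ 2 <= (\sum_j a j ^+ 2) * (\sum_j b j ^+ 2).
Proof.
set A := \sum_j a j ^+ 2; set B := \sum_j b j ^+ 2; set C := \sum_j a j * b j.
have B0 : 0 <= B by apply: sumr_ge0 => j _; exact: sqr_ge0.
case: (ltrP 0 B) => Bp; last first.
  have B00 : B = 0 by apply/eqP; rewrite eq_le Bp B0.
  have bz : forall j, b j = 0.
    move=> j; apply/eqP; rewrite -sqrf_eq0; apply/eqP.
    by move/psumr_eq0P: B00 => /(_ (fun i _ => sqr_ge0 (b i)) j isT) ->.
  rewrite /C big1 ?expr0n ?mulr0 //= ?B00 ?mulr0 // => j _; by rewrite bz mulr0.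
have H : 0 <= \sum_j (B * a j - C * b j) ^+ 2 by apply: sumr_ge0 => j _; exact: sqr_ge0.
have E : \sum_j (B * a j - C * b j) ^+ 2 = B * (A * B - C ^+ 2).
  have -> : \sum_j (B * a j - C * b j) ^+ 2 =
     \sum_j (B ^+ 2 * a j ^+ 2 - 2 * B * C * (a j * b j) + C ^+ 2 * b j ^+ 2).
    by apply: eq_bigr => j _; ring.
  rewrite big_split big_split /= -!mulr_sumr -/A -/B -/C.
  rewrite (_ : \sum_i - (2 * B * C * (a i * b i)) = - (2 * B * C * C)); first by ring.
  by rewrite sumrN -mulr_sumr.
rewrite E in H.
rewrite -subr_ge0 (mulrC A).
by rewrite pmulr_rge0 // mulrC in H.
Qed.
Lemma sum_dom (R : realFieldType) (I : finType) (X Y : {set I}) (f : I -> R) :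
  (#|X| <= #|Y|)%N -> (forall i, 0 <= f i) ->
  (forall x y, x \in X -> y \in Y -> f x <= f y) ->
  \sum_(x in X) f x <= \sum_(y in Y) f y.
Proof.
move=> cXY f0 dom.
have [Y0|Yp] := posnP #|Y|.
  have X0 : #|X| = 0%N by lia.
  move/eqP: X0; rewrite cards_eq0 => /eqP ->; rewrite big_set0.
  by apply: sumr_ge0.
rewrite -(ler_pMn2r Yp).
have -> : (\sum_(x in X) f x) *+ #|Y| = \sum_(y in Y) \sum_(x in X) f x by rewrite sumr_const.
have H1 : \sum_(y in Y) \sum_(x in X) f x <= \sum_(y in Y) \sum_(x in X) f y.
  by apply: ler_sum => y yY; apply: ler_sum => x xX; exact: dom.
apply: (le_trans H1).
rewrite exchange_big /= sumr_const.
rewrite -subr_ge0 -mulrnBr // mulrn_wge0 //; exact: sumr_ge0.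
Qed.

Lemma sum_top (R : realFieldType) (I : finType) (T S : {set I}) (f : I -> R) :
  (#|T| <= #|S|)%N -> (forall i, 0 <= f i) ->
  (forall j l, j \in S -> l \notin S -> f l <= f j) ->
  \sum_(x in T) f x <= \sum_(y in S) f y.
Proof.
move=> cTS f0 dom.
rewrite (big_setID S) [X in _ <= X](big_setID T) /= setIC lerD2l.
apply: sum_dom => //.
  have := cardsID S T; have := cardsID T S; rewrite setIC; lia.
move=> x y; rewrite !inE => /andP[xS _] /andP[_ yS]; exact: dom.
Qed.

Section S.
Variables (R : rcfType) (n : nat) (A : 'M[R]_n).
Definition bform (u w : 'cV[R]_n) := (u^T *m A *m w) 0 0.

Lemma qform_sub u w t : qform A (u - t *: w) =
  bform u u - t * bform u w - t * bform w u + t ^+ 2 * bform w w.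
Proof.
rewrite /qform /bform [(_ - _)^T]linearB /= [(_ *: _)^T]linearZ /= !mulmxBl !mulmxBr -!scalemxAl -!scalemxAr !mxE.
by ring.
Qed.

Lemma bform_sym u w : A^T = A -> bform w u = bform u w.
Proof.
move=> sA; rewrite /bform; transitivity ((u^T *m A *m w)^T 0 0); last by rewrite mxE.
by rewrite !trmx_mul trmxK sA mulmxA.
Qed.

Lemma qformZ t u : qform A (t *: u) = t ^+ 2 * qform A u.
Proof. by rewrite /qform [(_ *: _)^T]linearZ /= -!scalemxAl -!scalemxAr !mxE expr2 mulrA. Qed.

Lemma bform_e u i : bform u (delta_mx i 0) = \sum_j u j 0 * A j i.
Proof.
rewrite /bform -mulmxA -colE mxE; apply: eq_bigr => j _; by rewrite !mxE.
Qed.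

Lemma bform_ee i : bform (delta_mx i 0) (delta_mx i 0) = A i i.
Proof. by rewrite bform_e (bigD1 i) //= big1 ?mxE ?eqxx ?mul1r ?addr0 // => j /negbTE; rewrite mxE => ->; rewrite mul0r. Qed.

Lemma qform_sum y : qform A y = \sum_i y i 0 * (A *m y) i 0.
Proof. rewrite /qform -mulmxA mxE; apply: eq_bigr => j _; by rewrite !mxE. Qed.
End S.
Arguments bform {R n} A u w.
Arguments cs {R n} a b.
Arguments bform_sym {R n A} u w.
Arguments qform_sub {R n} A u w t.
Arguments bform_e {R n} A u i.
Arguments bform_ee {R n} A i.
Arguments qformZ {R n} A t u.
Arguments qform_sum {R n} A y.

Theorem lemma1 (R : rcfType) (n k : nat) (A : 'M[R]_n)
  (S : 'I_n -> {set 'I_n}) (v : 'cV[R]_n) :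
  symmetric_mx A -> psd A -> (1 <= k)%N -> (k <= n)%N ->
  (forall i, topk_support A k i (S i)) ->
  candidate A S v ->
  (forall w, candidate A S w -> qform A w <= qform A v) ->
  forall y : 'cV[R]_n, norm2 y = 1 -> (norm0 y <= k)%N ->
    qform A v >= qform A y / Num.sqrt (k%:R).
Proof.
move=> sA pA k1 kn topk _ best y ny n0y.
set c := qform A v.
have c0 : 0 <= c by exact: pA.
pose s i := norm2 (xhat A i (S i)).
have claim1 : forall i, s i <= c.
  move=> i; set x := xhat A i (S i).
  have sum0 : 0 <= \sum_j x j 0 ^+ 2 by apply: sumr_ge0 => j _; exact: sqr_ge0.
  have s2 : s i ^+ 2 = \sum_j x j 0 ^+ 2 by rewrite /s /norm2 sqr_sqrtr.
  have bxe : bform A x (delta_mx i 0) = s i ^+ 2.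
    rewrite bform_e s2; apply: eq_bigr => j _; rewrite /x /xhat !mxE.
    by case: (j \in S i); rewrite ?mul0r ?expr2 ?mulr0.
  have qx : qform A (xnorm A i (S i)) <= c by apply: best; exists i; left.
  have qe : A i i <= c.
    have := best (@std_basis R n i); rewrite /qform /std_basis -/(bform A _ _) bform_ee.
    by apply; exists i; right.
  have s0 : 0 <= s i by exact: sqrtr_ge0.
  have [sz|sp] := eqVneq (s i) 0; first by rewrite sz.
  have sp' : 0 < s i by rewrite lt_def sp s0.
  move: qx; rewrite /xnorm qformZ -/(s i) => qx.
  have qx' : qform A x <= c * s i ^+ 2.
    rewrite -(ler_pdivrMr _ _ (exprn_gt0 2 sp')) mulrC.
    by rewrite exprVn in qx.
  have := pA (x - s i *: delta_mx i 0); rewrite qform_sub (bform_sym x (delta_mx i 0) sA) bxe bform_ee.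
  rewrite -/(qform A x) => H.
  have H3 : 0 <= s i ^+ 2 * (c - A i i) by apply: mulr_ge0; [exact: sqr_ge0 | rewrite subr_ge0].
  change (bform A x x) with (qform A x) in H.
  have H2 : 0 <= s i ^+ 2 * (c - s i) by nra.
  by rewrite -subr_ge0; move: H2; rewrite pmulr_rge0 // exprn_gt0.
pose T := [set j | y j 0 != 0].
have cT : (#|T| <= k)%N by exact: n0y.
have sy : \sum_j y j 0 ^+ 2 = 1.
  move: ny; rewrite /norm2 => ny.
  rewrite -[LHS]sqr_sqrtr ?ny ?expr1n //; apply: sumr_ge0 => j _; exact: sqr_ge0.
have yT : forall j, j \notin T -> y j 0 = 0.
  by move=> j; rewrite inE negbK => /eqP.
have claim2 : forall i, `|\sum_j A j i * y j 0| <= s i.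
  move=> i.
  have -> : \sum_j A j i * y j 0 = \sum_j (if j \in T then A j i else 0) * y j 0.
    apply: eq_bigr => j _; case: ifP => // /negbT /yT ->; by rewrite !mulr0.
  have H := cs (fun j => if j \in T then A j i else 0) (fun j => y j 0).
  rewrite sy mulr1 in H.
  have H2 : \sum_j (if j \in T then A j i else 0) ^+ 2 <= s i ^+ 2.
    rewrite /s /norm2 sqr_sqrtr; last by apply: sumr_ge0 => j _; exact: sqr_ge0.
    have E : forall U : {set 'I_n}, \sum_j (if j \in U then A j i else 0) ^+ 2
                               = \sum_(j in U) A j i ^+ 2.
      move=> U; rewrite [RHS]big_mkcond /=; apply: eq_bigr => j _.
      by case: ifP; rewrite ?expr0n.
    have E' : \sum_j (xhat A i (S i) j 0) ^+ 2 = \sum_j (if j \in S i then A j i else 0) ^+ 2.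
      by apply: eq_bigr => j _; rewrite mxE.
    rewrite E' !E.
    have [cS domS] := topk i.
    apply: sum_top; first by rewrite cS.
      by move=> j; exact: sqr_ge0.
    move=> j l jS lS; rewrite -(real_normK (num_real (A l i))) -(real_normK (num_real (A j i))).
    rewrite ler_sqr ?nnegrE ?normr_ge0 //; exact: domS.
  rewrite -sqrtr_sqr -[s i]ger0_norm ?sqrtr_ge0 // -sqrtr_sqr.
  apply: ler_wsqrtr; exact: le_trans H H2.
have claim3 : \sum_j `|y j 0| <= Num.sqrt k%:R.
  have H := cs (fun j => if j \in T then 1 else 0) (fun j => `|y j 0|).
  have E1 : \sum_j (if j \in T then 1 else 0) * `|y j 0| = \sum_j `|y j 0|.
    apply: eq_bigr => j _; case: ifP => [_|/negbT /yT ->]; by rewrite ?mul1r ?mul0r ?normr0.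
  have E2 : \sum_j (if j \in T then (1:R) else 0) ^+ 2 = #|T|%:R.
    rewrite -sumr_const [RHS]big_mkcond /=; apply: eq_bigr => j _.
    by case: ifP; rewrite ?expr0n ?expr1n.
  have E3 : \sum_j `|y j 0| ^+ 2 = 1.
    by rewrite -sy; apply: eq_bigr => j _; rewrite real_normK ?num_real.
  rewrite E1 E2 E3 mulr1 in H.
  have s0 : 0 <= \sum_j `|y j 0| by apply: sumr_ge0 => j _.
  rewrite -[X in X <= _]ger0_norm // -sqrtr_sqr.
  apply: ler_wsqrtr; apply: le_trans H _; by rewrite ler_nat.
have kp : 0 < Num.sqrt (k%:R : R) by rewrite sqrtr_gt0 ltr0n.
rewrite ler_pdivrMr //.
have main : qform A y <= c * \sum_j `|y j 0|.
  rewrite qform_sum mulr_sumr; apply: ler_sum => i _.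
  have -> : (A *m y) i 0 = \sum_j A j i * y j 0.
    rewrite mxE; apply: eq_bigr => j _.
    by rewrite -{1}sA mxE.
  apply: le_trans (ler_norm _) _; rewrite normrM mulrC.
  apply: ler_wpM2r; first exact: normr_ge0.
  exact: le_trans (claim2 i) (claim1 i).
apply: le_trans main _; exact: ler_wpM2l.
Qed.
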